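(* Let $\ket{\psi}$ be a pure state on a tripartite system $ABC$ and let $\mathcal{E}$ be a quantum channel (CPTP map) applied to subsystem $B$. Let $\sigma=(\mathrm{id}_{AC}\otimes\mathcal{E})(\ket{\psi}\bra{\psi})$ be the resulting state on $A\,\mathcal{E}[B]\,C$, and let $\delta I = I(A:C|\mathcal{E}[B]) - I(A:C|B)$, where the first term is evaluated in $\sigma$ and the second in $\ket{\psi}$. Then $$\delta I\le 2\,S(A\,\mathcal{E}[B]\,C),$$ where $S(A\,\mathcal{E}[B]\,C)$ is the von Neumann entropy of $\sigma$.
   Context: The quantum conditional mutual information is $I(A:C|B)=S(AB)+S(BC)-S(B)-S(ABC)$ with von Neumann entropies. $\mathcal{E}[B]$ denotes the output system of the channel acting on $B$. *)

(* Defs.v *)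
From HB Require Import structures.
From mathcomp Require Import all_boot all_order all_algebra.
From mathcomp Require Import reals exp.
From mathcomp Require Import complex.
Set Implicit Arguments. Unset Strict Implicit. Unset Printing Implicit Defensive.
Import Order.TTheory GRing.Theory Num.Theory.
Local Open Scope ring_scope.

Section QInfo.
Variable R : realType.
Local Notation Cx := (complex R).

(* Operators on the Hilbert space C^I (I a finite index set = computational basis) *)
Definition op (I : finType) := I -> I -> Cx.

Definition cconj (z : Cx) : Cx := conjc z.

Definition mx_of (I : finType) (M : op I) : 'M[Cx]_#|I| :=
  \matrix_(i, j) M (enum_val i) (enum_val j).

Lemma char_poly_splits (I : finType) (M : op I) :
  exists r : seq Cx, char_poly (mx_of M) == \prod_(z <- r) ('X - z%:P).
Proof.
have [r Hr] := closed_field_poly_normal (char_poly (mx_of M)).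
exists r; apply/eqP; rewrite Hr.
by have /monicP -> := char_poly_monic (mx_of M); rewrite scale1r.
Qed.

(* the eigenvalues (with multiplicity) of M: roots of its characteristic polynomial *)
Definition spectrum (I : finType) (M : op I) : seq Cx := xchoose (char_poly_splits M).

Definition xlnx (x : R) : R := if x == 0 then 0 else x * ln x.

(* von Neumann entropy S(rho) = - Tr (rho ln rho) = - sum_lambda lambda ln lambda
   (natural logarithm, 0 ln 0 = 0; eigenvalues of a density matrix are real) *)
Definition vN_entropy (I : finType) (rho : op I) : R :=
  - \sum_(z <- spectrum rho) xlnx (complex.Re z).

Definition trace (I : finType) (M : op I) : Cx := \sum_i M i i.

Definition psd (I : finType) (M : op I) : Prop :=
  forall v : I -> Cx, 0 <= \sum_i \sum_j cconj (v i) * M i j * v j.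

Definition is_linear_map (I J : finType) (E : op I -> op J) : Prop :=
  forall (a : Cx) (X Y : op I), E (fun i i' => a * X i i' + Y i i') =
                                (fun j j' => a * E X j j' + E Y j j').

Definition id_tensor (n : nat) (I J : finType) (E : op I -> op J)
    (X : op ('I_n * I)%type) : op ('I_n * J)%type :=
  fun p q => E (fun i i' => X (p.1, i) (q.1, i')) p.2 q.2.

Definition CPTP (I J : finType) (E : op I -> op J) : Prop :=
  [/\ is_linear_map E,
      (forall X, trace (E X) = trace X) &
      (forall (n : nat) (X : op ('I_n * I)%type), psd X -> psd (id_tensor E X))].

(* tripartite system A B C, indexed by ((a, b), c) *)
Definition ptr_C (A B C : finType) (rho : op ((A * B) * C)%type) : op (A * B)%type :=
  fun x y => \sum_c rho (x, c) (y, c).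
Definition ptr_A (A B C : finType) (rho : op ((A * B) * C)%type) : op (B * C)%type :=
  fun x y => \sum_a rho ((a, x.1), x.2) ((a, y.1), y.2).
Definition ptr_AC (A B C : finType) (rho : op ((A * B) * C)%type) : op B :=
  fun b b' => \sum_a \sum_c rho ((a, b), c) ((a, b'), c).

Definition cmi (A B C : finType) (rho : op ((A * B) * C)%type) : R :=
  vN_entropy (ptr_C rho) + vN_entropy (ptr_A rho)
  - vN_entropy (ptr_AC rho) - vN_entropy rho.

Definition proj (I : finType) (psi : I -> Cx) : op I :=
  fun i j => psi i * cconj (psi j).

Definition unit_vector (I : finType) (psi : I -> Cx) : Prop :=
  \sum_i psi i * cconj (psi i) = 1.

Definition apply_on_B (A B B' C : finType) (E : op B -> op B')
    (rho : op ((A * B) * C)%type) : op ((A * B') * C)%type :=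
  fun x y => E (fun b b' => rho ((x.1.1, b), x.2) ((y.1.1, b'), y.2)) x.1.2 y.1.2.

End QInfo.

(* Main.v *)
Require Import Defs.
From HB Require Import structures.
From mathcomp Require Import all_boot all_order all_algebra.
From mathcomp Require Import reals exp.
From mathcomp Require Import complex spectral sesquilinear.
From mathcomp Require Import ring lra.
Import Order.TTheory GRing.Theory Num.Theory.
Local Open Scope ring_scope.
From Stdlib Require Import FunctionalExtensionality.
Set Implicit Arguments. Unset Strict Implicit. Unset Printing Implicit Defensive.

Section Q1.
Variable R : realType.
Local Notation C := (complex R).

Lemma conjCE (x : C) : (x^*)%R = conjc x.
Proof.
have [->|nz] := eqVneq x 0; first by rewrite conjC0 conjc0.
by apply: (mulfI nz); rewrite -normCK sqr_normc.
Qed.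

Lemma sum_enum (T : finType) (V : nmodType) (F : T -> V) :
  \sum_(i < #|T|) F (enum_val i) = \sum_x F x.
Proof.
rewrite (reindex (@enum_rank T)) /=; last first.
  by exists (@enum_val _ (mem T)) => x _; rewrite ?enum_rankK ?enum_valK.
by apply: eq_bigr => x _; rewrite enum_rankK.
Qed.

Lemma sum_deltar (T : finType) (F : T -> C) x :
  \sum_j F j * (j == x)%:R = F x.
Proof.
rewrite (bigD1 x) //= eqxx mulr1 big1 ?addr0 // => j /negbTE ->; by rewrite mulr0.
Qed.

Lemma sum_deltal (T : finType) (F : T -> C) x :
  \sum_j (x == j)%:R * F j = F x.
Proof.
rewrite (bigD1 x) //= eqxx mul1r big1 ?addr0 // => j; rewrite eq_sym => /negbTE ->; by rewrite mul0r.
Qed.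

Lemma conjc_sum (T : finType) (F : T -> C) : conjc (\sum_i F i) = \sum_i conjc (F i).
Proof. exact: rmorph_sum. Qed.

Lemma mx_ofE (I : finType) (M : op R I) x y :
  mx_of M (enum_rank x) (enum_rank y) = M x y.
Proof. by rewrite mxE !enum_rankK. Qed.

Lemma ge0_complex (z : C) : (0 <= z) = (complex.Im z == 0) && (0 <= complex.Re z).
Proof. by rewrite lecE. Qed.

Lemma sum_lin2 (T : finType) (G : T -> C) x y (a b : C) :
  \sum_j G j * ((j == x)%:R * a + (j == y)%:R * b) = G x * a + G y * b.
Proof.
rewrite -(sum_deltar (fun j => G j * a) x) -(sum_deltar (fun j => G j * b) y) -big_split.
by apply: eq_bigr => j _ /=; ring.
Qed.

Lemma sum_lin2c (T : finType) (G : T -> C) x y (a b : C) :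
  \sum_j conjc ((j == x)%:R * a + (j == y)%:R * b) * G j = conjc a * G x + conjc b * G y.
Proof.
rewrite -(sum_deltar (fun j => conjc a * G j) x) -(sum_deltar (fun j => conjc b * G j) y) -big_split.
by apply: eq_bigr => j _ /=; rewrite rmorphD !rmorphM /= !rmorph_nat; ring.
Qed.

Definition qform (I : finType) (M : op R I) (v : I -> C) : C :=
  \sum_i \sum_j cconj (v i) * M i j * v j.

Lemma qform2 (I : finType) (M : op R I) x y (a b : C) :
  qform M (fun z => (z == x)%:R * a + (z == y)%:R * b) =
  conjc a * M x x * a + conjc a * M x y * b + conjc b * M y x * a + conjc b * M y y * b.
Proof.
rewrite /qform /cconj.
under eq_bigr do under eq_bigr do rewrite -mulrA.
under eq_bigr do rewrite -big_distrr /= sum_lin2.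
rewrite sum_lin2c; ring.
Qed.

Lemma herm_aux (p q s t : C) : 0 <= p -> 0 <= t -> 0 <= p + q + s + t ->
  0 <= p + 'i%C * q - 'i%C * s + t -> s = conjc q.
Proof.
case: p => p1 p2; case: q => q1 q2; case: s => s1 s2; case: t => t1 t2.
rewrite !ge0_complex /= => /andP[/eqP h1 _] /andP[/eqP h2 _] /andP[/eqP h3 _] /andP[/eqP h4 _].
by congr Complex; lra.
Qed.

Lemma psd_diag (I : finType) (M : op R I) x : psd M -> 0 <= M x x.
Proof.
move=> /(_ (fun z => (z == x)%:R * 1 + (z == x)%:R * 0)).
rewrite -/(qform M _) qform2 conjc1 conjc0.
by rewrite !mulr0 !mul0r !addr0 mul1r mulr1.
Qed.

Lemma psd_herm (I : finType) (M : op R I) x y : psd M -> M y x = conjc (M x y).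
Proof.
move=> H; have [<-|nxy] := eqVneq x y.
  have := psd_diag x H; case: (M x x) => a b; rewrite ge0_complex /= => /andP[/eqP -> _].
  by rewrite oppr0.
apply: herm_aux (psd_diag x H) (psd_diag y H) _ _.
  move: (H (fun z => (z == x)%:R * 1 + (z == y)%:R * 1)).
  by rewrite -/(qform M _) qform2 conjc1 !mulr1 !mul1r.
move: (H (fun z => (z == x)%:R * 1 + (z == y)%:R * 'i%C)).
rewrite -/(qform M _) qform2 conjc1 !mulr1 !mul1r.
have -> : conjc 'i%C = - 'i%C :> C by apply/eqP; rewrite eq_complex /= oppr0 !eqxx.
have -> : - 'i%C * M y y * 'i%C = M y y :> C.
  by rewrite mulrAC mulNr -expr2 sqr_i opprK mul1r.
congr (0 <= _); ring.
Qed.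

End Q1.

Section Q2.
Variable R : realType.
Local Notation C := (complex R).
Local Open Scope complex_scope.
Local Open Scope ring_scope.
Local Open Scope sesquilinear_scope.

Definition decomp (I : finType) (M : op R I) (d : I -> C) (e : I -> I -> C) :=
  [/\ forall k k', \sum_x conjc (e k x) * e k' x = (k == k')%:R,
      forall x x', \sum_k e k x * conjc (e k x') = (x == x')%:R &
      forall x x', M x x' = \sum_k d k * e k x * conjc (e k x')].

Lemma sum_mul2 (I J : finType) (a : C) (f : I -> C) (g : J -> C) :
  a * (\sum_x f x) * (\sum_y g y) = \sum_x \sum_y a * f x * g y.
Proof.
rewrite -mulrA [(\sum_x f x) * _]mulr_suml mulr_sumr; apply: eq_bigr => x _.
rewrite mulr_sumr mulr_sumr; apply: eq_bigr => y _; ring.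
Qed.

Lemma decomp_bil (I : finType) (M : op R I) d e (u w : I -> C) : decomp M d e ->
  \sum_x \sum_x' conjc (u x) * M x x' * w x' =
  \sum_k d k * (\sum_x conjc (u x) * e k x) * (\sum_x' conjc (e k x') * w x').
Proof.
case=> _ _ HM.
transitivity (\sum_x \sum_x' \sum_k conjc (u x) * (d k * e k x * conjc (e k x')) * w x').
  apply: eq_bigr => x _; apply: eq_bigr => x' _.
  by rewrite HM big_distrr big_distrl.
under eq_bigr do rewrite exchange_big.
rewrite exchange_big; apply: eq_bigr => k _.
by rewrite sum_mul2; apply: eq_bigr => x _; apply: eq_bigr => x' _; ring.
Qed.

Lemma decomp_qform (I : finType) (M : op R I) d e k : decomp M d e ->
  qform M (e k) = d k.
Proof.
move=> D; rewrite /qform /cconj (decomp_bil _ _ D).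
case: D => Ho _ _.
under eq_bigr do rewrite Ho.
have Ho' : forall j, \sum_x' conjc (e j x') * e k x' = (j == k)%:R by move=> j; rewrite Ho.
under eq_bigr do rewrite Ho'.
rewrite (bigD1 k) //= eqxx !mulr1 big1 ?addr0 // => j /negbTE nj.
by rewrite eq_sym nj mulr0.
Qed.


Lemma sum_enum_rank (T : finType) (V : nmodType) (F : 'I_#|T| -> V) :
  \sum_(i < #|T|) F i = \sum_x F (enum_rank x).
Proof.
rewrite -(sum_enum (fun x => F (enum_rank x))).
by apply: eq_bigr => i _; rewrite enum_valK.
Qed.

Lemma ge0_real (z : C) : 0 <= z -> z = (complex.Re z)%:C.
Proof. by case: z => a b; rewrite ge0_complex /= => /andP[/eqP -> _]. Qed.

Lemma char_poly_similar n (P A : 'M[C]_n) : P \in unitmx ->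
  char_poly (invmx P *m A *m P) = char_poly A.
Proof.
move=> Pu; rewrite /char_poly /char_poly_mx.
have hP : map_mx polyC (invmx P) *m map_mx polyC P = 1%:M.
  by rewrite -map_mxM mulVmx // map_mx1.
have -> : 'X%:M - map_mx polyC (invmx P *m A *m P) =
   map_mx polyC (invmx P) *m ('X%:M - map_mx polyC A) *m map_mx polyC P.
  rewrite mulmxBr mulmxBl !map_mxM mul_mx_scalar -scalemxAl hP scalemx1.
  by [].
set a := map_mx _ (invmx P); set b := map_mx _ P; set c := _ - _.
rewrite (det_mulmx (a *m c) b) (det_mulmx a c).
by rewrite mulrAC -det_mulmx hP det1 mul1r.
Qed.

Lemma herm_mx_of (I : finType) (M : op R I) : psd M ->
  (mx_of M) ^t* = mx_of M.
Proof.
move=> H; apply/matrixP => i j; rewrite !mxE conjCE.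
by rewrite (psd_herm (enum_val j) (enum_val i) H).
Qed.

Lemma eig_decomp (I : finType) (M : op R I) : psd M ->
  exists (l : I -> R) (e : I -> I -> C),
  [/\ decomp M (fun k => (l k)%:C) e, forall k, 0 <= l k &
      vN_entropy M = - \sum_k xlnx (l k)].
Proof.
move=> Hpsd.
set Mx := mx_of M.
have Hn : Mx \is normalmx.
  by apply/normalmxP; rewrite /Mx herm_mx_of.
set P := spectralmx Mx; set d := spectral_diag Mx.
have HMx : Mx = invmx P *m diag_mx d *m P by apply/orthomx_spectralP.
have Pun : P \is unitarymx := spectral_unitarymx Mx.
have Pu : P \in unitmx := unitarymx_unit Pun.
have HPP : P *m P ^t* = 1%:M by apply/unitarymxP.
have HPP' : P ^t* *m P = 1%:M by rewrite -invmx_unitary // mulVmx.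
have Hinv : invmx P = P ^t* by rewrite invmx_unitary.
pose e k x := conjc (P (enum_rank k) (enum_rank x)).
pose dd k := d 0 (enum_rank k).
have D : decomp M dd e.
  split.
  - move=> k k'; rewrite /e.
    under eq_bigr do rewrite conjcK.
    have := congr1 (fun A : 'M[C]_#|I| => A (enum_rank k) (enum_rank k')) HPP.
    rewrite !mxE (inj_eq enum_rank_inj) => <-.
    rewrite sum_enum_rank; apply: eq_bigr => x _; by rewrite !mxE conjCE.
  - move=> x x'; rewrite /e.
    under eq_bigr do rewrite conjcK.
    have := congr1 (fun A : 'M[C]_#|I| => A (enum_rank x) (enum_rank x')) HPP'.
    rewrite !mxE (inj_eq enum_rank_inj) => <-.
    rewrite sum_enum_rank; apply: eq_bigr => k _; by rewrite !mxE conjCE.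
  - move=> x x'; rewrite -mx_ofE -/Mx HMx Hinv mul_mx_diag !mxE sum_enum_rank.
    apply: eq_bigr => k _; rewrite !mxE /e /dd conjcK conjCE; ring.
have Hdd : forall k, dd k = (complex.Re (dd k))%:C.
  move=> k; apply: ge0_real; rewrite -(decomp_qform k D); exact: Hpsd.
exists (fun k => complex.Re (dd k)), e; split.
- case: D => h1 h2 h3; split => // x x'; rewrite h3.
  by apply: eq_bigr => k _; rewrite -Hdd.
- move=> k; have := Hpsd (e k); rewrite -/(qform M _) (decomp_qform k D).
  by rewrite ge0_complex => /andP[_].
- have Hs := xchooseP (char_poly_splits M).
  have Hc : char_poly Mx = \prod_(z <- [seq d 0 i | i <- enum 'I_#|I|]) ('X - z%:P).
    rewrite HMx char_poly_similar // char_poly_trig ?diag_mx_is_trig //.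
    rewrite big_map big_enum /=; apply: eq_bigr => i _; by rewrite mxE eqxx mulr1n.
  have Hp : perm_eq (spectrum M) [seq d 0 i | i <- enum 'I_#|I|].
    by apply: prod_XsubC_eq; rewrite -Hc; apply/esym/eqP; exact: Hs.
  rewrite /vN_entropy (perm_big _ Hp) big_map big_enum /= sum_enum_rank.
  done.
Qed.

End Q2.

Section Q3.
Variable R : realType.
Local Notation C := (complex R).
Local Open Scope complex_scope.
Local Open Scope ring_scope.
Local Open Scope sesquilinear_scope.

Lemma sylvester p q (A : 'M[C]_(p, q)) (B : 'M[C]_(q, p)) :
  'X^q * char_poly (A *m B) = 'X^p * char_poly (B *m A).
Proof.
rewrite /char_poly /char_poly_mx !map_mxM.
set a := map_mx polyC A; set b := map_mx polyC B.
pose M1 := block_mx ('X%:M : 'M_p) a b (1%:M : 'M_q).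
have E1 : block_mx 1%:M (-a) 0 1%:M *m M1 = block_mx ('X%:M - a *m b) 0 b 1%:M.
  rewrite mulmx_block !mul1mx !mul0mx !add0r mulmx1 mulNmx addrN.
  by [].
have E2 : block_mx 1%:M 0 (-b) 'X%:M *m M1 = block_mx 'X%:M a 0 ('X%:M - b *m a).
  rewrite mulmx_block !mul1mx !mul0mx !addr0 mulmx1 mulNmx.
  by rewrite mul_mx_scalar mul_scalar_mx addNr mulNmx addrC.
have D1 := congr1 (fun m => \det m) E1.
have D2 := congr1 (fun m => \det m) E2.
rewrite det_mulmx det_ublock !det1 mul1r det_lblock det1 mulr1 in D1.
rewrite det_mulmx det_lblock det1 mul1r det_ublock !det_scalar in D2.
by rewrite -D1 mul1r.
Qed.

Lemma char_poly_tr n (N : 'M[C]_n) : char_poly N^T = char_poly N.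
Proof.
rewrite /char_poly /char_poly_mx -det_tr; congr determinant.
by apply/matrixP => i j; rewrite !mxE eq_sym.
Qed.


Definition mA (X Y : finType) (phi : X -> Y -> C) : op R X :=
  fun x x' => \sum_y phi x y * conjc (phi x' y).
Definition mB (X Y : finType) (phi : X -> Y -> C) : op R Y :=
  fun y y' => \sum_x phi x y * conjc (phi x y').

Lemma spec_prod (I : finType) (M : op R I) :
  char_poly (mx_of M) = \prod_(z <- spectrum M) ('X - z%:P).
Proof. by apply/eqP; exact: (xchooseP (char_poly_splits M)). Qed.

Lemma prod_nseq0 n : \prod_(z <- nseq n (0 : C)) ('X - z%:P) = 'X^n.
Proof. by elim: n => [|n IH]; rewrite ?big_nil ?expr0 // big_cons IH subr0 exprS. Qed.

Lemma sum_nseq0 n : \sum_(z <- nseq n (0 : C)) xlnx (complex.Re z) = 0.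
Proof.
elim: n => [|n IH]; rewrite ?big_nil // big_cons IH addr0 /xlnx /=.
by rewrite eqxx.
Qed.

Lemma sum_enumV (T : finType) (V : nmodType) (F : T -> V) :
  \sum_x F x = \sum_(i < #|T|) F (enum_val i).
Proof. by rewrite sum_enum. Qed.

Lemma pure_entropy (X Y : finType) (phi : X -> Y -> C) :
  vN_entropy (mA phi) = vN_entropy (mB phi).
Proof.
pose Mp := \matrix_(i < #|X|, j < #|Y|) phi (enum_val i) (enum_val j).
have HB : mx_of (mB phi) = Mp^T *m (map_mx Num.conj Mp).
  apply/matrixP => j j'; rewrite mxE /mB [LHS]sum_enumV !mxE; apply: eq_bigr => i _.
  by rewrite !mxE conjCE.
have HA : (map_mx Num.conj Mp) *m Mp^T = (mx_of (mA phi))^T.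
  apply/matrixP => i i'; rewrite !mxE /mA [RHS]sum_enumV; apply: eq_bigr => j _.
  by rewrite !mxE conjCE mulrC.
have := sylvester Mp^T (map_mx Num.conj Mp).
rewrite -HB HA char_poly_tr !spec_prod -!prod_nseq0 -!big_cat => /prod_XsubC_eq Hp.
rewrite /vN_entropy; congr (- _).
rewrite -[LHS]add0r -{1}(sum_nseq0 #|Y|) -big_cat -(perm_big _ Hp) big_cat /=.
by rewrite sum_nseq0 add0r.
Qed.

End Q3.

Section Q4.
Variable R : realType.

Lemma xlnxE (x : R) : xlnx x = x * ln x.
Proof. by rewrite /xlnx; case: eqP => [->|//]; rewrite mul0r. Qed.

Lemma ln_le_sub1 (x : R) : 0 < x -> ln x <= x - 1.
Proof.
move=> x0; have := expR_ge1Dx (ln x); rewrite lnK ?posrE // => h; lra.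
Qed.

Lemma klein (K I J : finType) (p : K -> R) (a : I -> R) (b : J -> R)
  (q : K -> I -> J -> R) :
  (forall k, 0 <= p k) -> (forall k i j, 0 <= q k i j) ->
  (forall k, \sum_i \sum_j q k i j = 1) ->
  (forall i j, \sum_k q k i j = 1) ->
  (forall i, \sum_j \sum_k p k * q k i j = a i) ->
  (forall j, \sum_i \sum_k p k * q k i j = b j) ->
  \sum_k p k = 1 -> \sum_i a i = 1 -> \sum_j b j = 1 ->
  \sum_i xlnx (a i) + \sum_j xlnx (b j) <= \sum_k xlnx (p k).
Proof.
move=> p0 q0 Hq1 Hq2 Ha Hb Hp1 Ha1 Hb1.
pose r i j := \sum_k p k * q k i j.
have r0 : forall i j, 0 <= r i j by move=> i j; apply: sumr_ge0 => k _; exact: mulr_ge0.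
have a0 : forall i, 0 <= a i by move=> i; rewrite -Ha; apply: sumr_ge0 => j _; exact: r0.
have b0 : forall j, 0 <= b j by move=> j; rewrite -Hb; apply: sumr_ge0 => i _; exact: r0.
have ra : forall i j, r i j <= a i.
  move=> i j; rewrite -Ha (bigD1 j) //= -/(r i j) lerDl; apply: sumr_ge0 => j' _; exact: r0.
have rb : forall i j, r i j <= b j.
  move=> i j; rewrite -Hb (bigD1 i) //= -/(r i j) lerDl; apply: sumr_ge0 => i' _; exact: r0.
have pr : forall k i j, p k * q k i j <= r i j.
  move=> k i j; rewrite /r (bigD1 k) //= lerDl; apply: sumr_ge0 => k' _; exact: mulr_ge0.
have T : forall k i j, p k * q k i j * (ln (a i * b j) - ln (p k)) <=
    q k i j * (a i * b j) - p k * q k i j.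
  move=> k i j.
  have [pq0|pq0] := eqVneq (p k * q k i j) 0.
    by rewrite pq0 mul0r subr0; apply: mulr_ge0 => //; apply: mulr_ge0.
  have pqp : 0 < p k * q k i j by rewrite lt_def pq0 mulr_ge0.
  have pk : 0 < p k.
    by rewrite lt_def (p0 k) andbT; apply: contra pq0 => /eqP ->; rewrite mul0r.
  have qk : 0 < q k i j.
    by rewrite lt_def (q0 k i j) andbT; apply: contra pq0 => /eqP ->; rewrite mulr0.
  have ai : 0 < a i by apply: lt_le_trans (ra i j); exact: lt_le_trans (pr k i j).
  have bj : 0 < b j by apply: lt_le_trans (rb i j); exact: lt_le_trans (pr k i j).
  have abp : 0 < a i * b j / p k by rewrite divr_gt0 // mulr_gt0.
  have := ln_le_sub1 abp; rewrite ln_div ?posrE ?mulr_gt0 // => hl.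
  have := ler_wpM2l (ltW pqp) hl.
  have -> : p k * q k i j * (a i * b j / p k - 1) = q k i j * (a i * b j) - p k * q k i j.
    by field; rewrite gt_eqF.
  done.
have S : \sum_k \sum_i \sum_j p k * q k i j * (ln (a i * b j) - ln (p k)) <=
         \sum_k \sum_i \sum_j (q k i j * (a i * b j) - p k * q k i j).
  apply: ler_sum => k _; apply: ler_sum => i _; apply: ler_sum => j _; exact: T.
have E1 : \sum_k \sum_i \sum_j (q k i j * (a i * b j) - p k * q k i j) = 0.
  under eq_bigr do under eq_bigr do rewrite sumrB.
  under eq_bigr do rewrite sumrB.
  rewrite sumrB.
  have -> : \sum_k \sum_i \sum_j p k * q k i j = 1.
    rewrite -Hp1; apply: eq_bigr => k _; rewrite -[RHS]mulr1 -(Hq1 k) mulr_sumr.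
    by apply: eq_bigr => i _; rewrite mulr_sumr.
  rewrite exchange_big /=.
  under eq_bigr do rewrite exchange_big /=.
  have -> : \sum_i \sum_j \sum_k q k i j * (a i * b j) = (\sum_i a i) * (\sum_j b j).
    rewrite mulr_suml; apply: eq_bigr => i _; rewrite mulr_sumr; apply: eq_bigr => j _.
    by rewrite -mulr_suml Hq2 mul1r.
  by rewrite Ha1 Hb1 mul1r subrr.
have E2 : \sum_k \sum_i \sum_j p k * q k i j * (ln (a i * b j) - ln (p k)) =
    (\sum_i xlnx (a i) + \sum_j xlnx (b j)) - \sum_k xlnx (p k).
  under eq_bigr do under eq_bigr do under eq_bigr do rewrite mulrBr.
  under eq_bigr do under eq_bigr do rewrite sumrB.
  under eq_bigr do rewrite sumrB.
  rewrite sumrB; congr (_ - _); last first.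
    apply: eq_bigr => k _; rewrite xlnxE -[RHS]mul1r -(Hq1 k) mulr_suml.
    apply: eq_bigr => i _; rewrite mulr_suml; apply: eq_bigr => j _; ring.
  rewrite exchange_big /=; under eq_bigr do rewrite exchange_big /=.
  have H : forall i j, \sum_k p k * q k i j * ln (a i * b j) =
      r i j * ln (a i) + r i j * ln (b j).
    move=> i j; rewrite -mulr_suml -/(r i j) -mulrDr.
    have [->|rn] := eqVneq (r i j) 0; first by rewrite !mul0r.
    have rp : 0 < r i j by rewrite lt_def rn r0.
    by rewrite lnM ?posrE; [| exact: lt_le_trans (ra i j) | exact: lt_le_trans (rb i j)].
  under eq_bigr do under eq_bigr do rewrite H.
  under eq_bigr do rewrite big_split /=.
  rewrite big_split /=; congr (_ + _).
    apply: eq_bigr => i _; rewrite -mulr_suml Ha xlnxE //.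
  rewrite exchange_big /=; apply: eq_bigr => j _; rewrite -mulr_suml Hb xlnxE //.
rewrite E1 E2 subr_le0 in S; exact: S.
Qed.

End Q4.

Section Q5.
Variable R : realType.
Local Notation C := (complex R).
Local Open Scope complex_scope.
Local Open Scope ring_scope.

Definition ip (T : finType) (f g : T -> C) := \sum_t conjc (f t) * g t.
Definition tens (X Y : finType) (f : X -> C) (g : Y -> C) : (X * Y)%type -> C :=
  fun z => f z.1 * g z.2.
Definition compl (T : finType) (e : T -> T -> C) :=
  forall x x', \sum_k e k x * conjc (e k x') = (x == x')%:R.

Lemma sum_pair (X Y : finType) (V : nmodType) (F : (X * Y)%type -> V) :
  \sum_z F z = \sum_x \sum_y F (x, y).
Proof. by rewrite pair_big; apply: eq_bigr => -[]. Qed.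

Lemma ip_conj (T : finType) (f g : T -> C) : conjc (ip f g) = ip g f.
Proof.
rewrite /ip rmorph_sum; apply: eq_bigr => t _.
by rewrite rmorphM /= conjcK mulrC.
Qed.

Lemma ip_tens (X Y : finType) (f f' : X -> C) (g g' : Y -> C) :
  ip (tens f g) (tens f' g') = ip f f' * ip g g'.
Proof.
rewrite /ip /tens sum_pair mulr_suml; apply: eq_bigr => x _.
rewrite mulr_sumr; apply: eq_bigr => y _ /=; rewrite rmorphM /=; ring.
Qed.

Lemma decomp_compl (T : finType) (M : op R T) d e : decomp M d e -> compl e.
Proof. by case. Qed.

Lemma parseval (T : finType) (e : T -> T -> C) (f g : T -> C) : compl e ->
  \sum_k ip f (e k) * ip (e k) g = ip f g.
Proof.
move=> He.
transitivity (\sum_k \sum_t \sum_t' conjc (f t) * (e k t * conjc (e k t')) * g t').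
  apply: eq_bigr => k _; rewrite /ip mulr_suml; apply: eq_bigr => t _.
  rewrite mulr_sumr; apply: eq_bigr => t' _; ring.
rewrite exchange_big /=; apply: eq_bigr => t _.
rewrite exchange_big /=.
under eq_bigr do rewrite -mulr_suml -mulr_sumr He.
rewrite (bigD1 t) //= eqxx mulr1 big1 ?addr0 // => t' /negbTE; rewrite eq_sym => ->.
by rewrite mulr0 mul0r.
Qed.

Lemma compl_tens (I J : finType) (u : I -> I -> C) (v : J -> J -> C) :
  compl u -> compl v -> compl (fun ij : (I * J)%type => tens (u ij.1) (v ij.2)).
Proof.
move=> Hu Hv [x y] [x' y']; rewrite sum_pair /tens /= xpair_eqE.
transitivity ((\sum_i u i x * conjc (u i x')) * \sum_j v j y * conjc (v j y')).
  rewrite mulr_suml; apply: eq_bigr => i _; rewrite mulr_sumr; apply: eq_bigr => j _.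
  rewrite rmorphM /=; ring.
by rewrite Hu Hv -natrM mulnb.
Qed.


Definition ptrY (X Y : finType) (rho : op R (X * Y)%type) : op R X :=
  fun x x' => \sum_y rho (x, y) (x', y).
Definition ptrX (X Y : finType) (rho : op R (X * Y)%type) : op R Y :=
  fun y y' => \sum_x rho (x, y) (x, y').

Lemma marg_X (X Y : finType) (rho : op R (X * Y)%type) (f : X -> C) (v : Y -> Y -> C) :
  compl v -> \sum_j qform rho (tens f (v j)) = qform (ptrY rho) f.
Proof.
move=> Hv; rewrite /qform /cconj /tens.
transitivity (\sum_z \sum_z' conjc (f z.1) * rho z z' * f z'.1 * (z'.2 == z.2)%:R).
  rewrite exchange_big; apply: eq_bigr => z _; rewrite exchange_big; apply: eq_bigr => z' _.
  rewrite -(Hv z'.2 z.2) mulr_sumr; apply: eq_bigr => j _; rewrite rmorphM /=; ring.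
rewrite sum_pair; apply: eq_bigr => x _; rewrite /ptrY.
rewrite exchange_big sum_pair /=; apply: eq_bigr => x' _.
rewrite exchange_big /= mulr_sumr mulr_suml; apply: eq_bigr => y _.
by rewrite sum_deltar.
Qed.

Lemma marg_Y (X Y : finType) (rho : op R (X * Y)%type) (u : X -> X -> C) (g : Y -> C) :
  compl u -> \sum_i qform rho (tens (u i) g) = qform (ptrX rho) g.
Proof.
move=> Hu; rewrite /qform /cconj /tens.
transitivity (\sum_z \sum_z' conjc (g z.2) * rho z z' * g z'.2 * (z'.1 == z.1)%:R).
  rewrite exchange_big; apply: eq_bigr => z _; rewrite exchange_big; apply: eq_bigr => z' _.
  rewrite -(Hu z'.1 z.1) mulr_sumr; apply: eq_bigr => j _; rewrite rmorphM /=; ring.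
rewrite sum_pair exchange_big /=; apply: eq_bigr => y _; rewrite /ptrX.
rewrite exchange_big sum_pair /= exchange_big /=; apply: eq_bigr => y' _.
rewrite mulr_sumr mulr_suml; apply: eq_bigr => x _.
by under eq_bigr do rewrite eq_sym; rewrite sum_deltar.
Qed.

Lemma decomp_trace (T : finType) (M : op R T) d e : decomp M d e ->
  trace M = \sum_k d k.
Proof.
case=> Ho _ HM; rewrite /trace.
under eq_bigr do rewrite HM.
rewrite exchange_big /=; apply: eq_bigr => k _.
transitivity (d k * (\sum_x conjc (e k x) * e k x)); last by rewrite Ho eqxx mulr1.
rewrite mulr_sumr; apply: eq_bigr => x _; ring.
Qed.

Lemma compl_std (T : finType) : compl (fun j y : T => (j == y)%:R).
Proof.
move=> y y'; under eq_bigr do rewrite conjc_nat [_ == y]eq_sym.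
exact: sum_deltal.
Qed.

Lemma psd_ptrY (X Y : finType) (rho : op R (X * Y)%type) : psd rho -> psd (ptrY rho).
Proof.
move=> H f; rewrite -/(qform _ f) -(marg_X rho f (v := fun j y => (j == y)%:R)).
  by apply: sumr_ge0 => j _; exact: H.
exact: compl_std.
Qed.

Lemma psd_ptrX (X Y : finType) (rho : op R (X * Y)%type) : psd rho -> psd (ptrX rho).
Proof.
move=> H g; rewrite -/(qform _ g) -(marg_Y rho g (u := fun j y => (j == y)%:R)).
  by apply: sumr_ge0 => j _; exact: H.
exact: compl_std.
Qed.


Lemma qform_ip (T : finType) (M : op R T) d e f : decomp M d e ->
  qform M f = \sum_k d k * ip f (e k) * ip (e k) f.
Proof. by move=> D; rewrite /qform /cconj (decomp_bil _ _ D). Qed.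

Lemma sum_pairV (X Y : finType) (V : nmodType) (F : X -> Y -> V) :
  \sum_x \sum_y F x y = \sum_z F z.1 z.2.
Proof. by rewrite sum_pair. Qed.

Lemma trace_ptrY (X Y : finType) (rho : op R (X * Y)%type) : trace (ptrY rho) = trace rho.
Proof. by rewrite /trace /ptrY sum_pair. Qed.

Lemma trace_ptrX (X Y : finType) (rho : op R (X * Y)%type) : trace (ptrX rho) = trace rho.
Proof. by rewrite /trace /ptrX sum_pair exchange_big. Qed.

Lemma subadd (X Y : finType) (rho : op R (X * Y)%type) : psd rho -> trace rho = 1 ->
  vN_entropy rho <= vN_entropy (ptrY rho) + vN_entropy (ptrX rho).
Proof.
move=> Hp Ht.
have [p [w [Dw p0 Sw]]] := eig_decomp Hp.
have [a [u [Du a0 Su]]] := eig_decomp (psd_ptrY Hp).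
have [b [v [Dv b0 Sv]]] := eig_decomp (psd_ptrX Hp).
pose c k i j := ip (w k) (tens (u i) (v j)).
pose q k i j := complex.Re (c k i j * conjc (c k i j)).
have qC : forall k i j, (q k i j)%:C = ip (w k) (tens (u i) (v j)) * ip (tens (u i) (v j)) (w k).
  by move=> k i j; rewrite -[ip (tens _ _) (w k)]ip_conj -ge0_real //; exact: mulcJ_ge0.
have q0 : forall k i j, 0 <= q k i j.
  by move=> k i j; have := mulcJ_ge0 (c k i j); rewrite ge0_complex => /andP[].
have Cw := decomp_compl Dw; have Cu := decomp_compl Du; have Cv := decomp_compl Dv.
have [Ow _ _] := Dw; have [Ou _ _] := Du; have [Ov _ _] := Dv.
have Hq1 : forall k, \sum_i \sum_j q k i j = 1.
  move=> k; apply: complexI; rewrite rmorph_sum /=.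
  under eq_bigr do rewrite rmorph_sum /=.
  under eq_bigr do under eq_bigr do rewrite qC.
  rewrite (sum_pairV (fun i j => ip (w k) (tens (u i) (v j)) * ip (tens (u i) (v j)) (w k))).
  by rewrite /= (parseval _ _ (compl_tens Cu Cv)) /ip Ow eqxx.
have Hq2 : forall i j, \sum_k q k i j = 1.
  move=> i j; apply: complexI; rewrite rmorph_sum /=.
  under eq_bigr do rewrite qC mulrC.
  by rewrite (parseval _ _ Cw) ip_tens /ip Ou Ov !eqxx mulr1.
have Ha : forall i, \sum_j \sum_k p k * q k i j = a i.
  move=> i; apply: complexI; rewrite rmorph_sum /=.
  under eq_bigr do rewrite rmorph_sum /=.
  under eq_bigr do under eq_bigr do rewrite rmorphM /= qC.
  rewrite -(decomp_qform i Du) -(marg_X rho (u i) Cv); apply: eq_bigr => j _.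
  rewrite (qform_ip _ Dw); apply: eq_bigr => k _; ring.
have Hb : forall j, \sum_i \sum_k p k * q k i j = b j.
  move=> j; apply: complexI; rewrite rmorph_sum /=.
  under eq_bigr do rewrite rmorph_sum /=.
  under eq_bigr do under eq_bigr do rewrite rmorphM /= qC.
  rewrite -(decomp_qform j Dv) -(marg_Y rho (v j) Cu); apply: eq_bigr => i _.
  rewrite (qform_ip _ Dw); apply: eq_bigr => k _; ring.
have Hp1 : \sum_k p k = 1.
  by apply: complexI; rewrite rmorph_sum /= -(decomp_trace Dw) Ht.
have Ha1 : \sum_i a i = 1.
  by apply: complexI; rewrite rmorph_sum /= -(decomp_trace Du) trace_ptrY Ht.
have Hb1 : \sum_j b j = 1.
  by apply: complexI; rewrite rmorph_sum /= -(decomp_trace Dv) trace_ptrX Ht.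
have := klein p0 q0 Hq1 Hq2 Ha Hb Hp1 Ha1 Hb1.
rewrite Sw Su Sv; lra.
Qed.

End Q5.

Section Q6.
Variable R : realType.
Local Notation C := (complex R).
Local Open Scope complex_scope.
Local Open Scope ring_scope.

Lemma vN_ext (I : finType) (M N : op R I) : (forall x y, M x y = N x y) ->
  vN_entropy M = vN_entropy N.
Proof.
move=> H; have -> : M = N by do 2 (apply: functional_extensionality => ?); apply: H.
by [].
Qed.

Lemma psd_mB (X Y : finType) (phi : X -> Y -> C) : psd (mB phi).
Proof.
move=> v; rewrite -/(qform _ v) /qform /mB /cconj.
have -> : \sum_i \sum_j conjc (v i) * (\sum_x phi x i * conjc (phi x j)) * v j =
   \sum_x (\sum_i conjc (v i) * phi x i) * conjc (\sum_j conjc (v j) * phi x j).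
  transitivity (\sum_i \sum_j \sum_x conjc (v i) * (phi x i * conjc (phi x j)) * v j).
    apply: eq_bigr => i _; apply: eq_bigr => j _; by rewrite mulr_sumr mulr_suml.
  rewrite exchange_big /=; under eq_bigr do rewrite exchange_big /=.
  rewrite exchange_big /=; apply: eq_bigr => x _.
  rewrite exchange_big /= rmorph_sum mulr_suml; apply: eq_bigr => i _.
  rewrite mulr_sumr; apply: eq_bigr => j _; rewrite rmorphM /= conjcK; ring.
by apply: sumr_ge0 => x _; exact: mulcJ_ge0.
Qed.

Lemma psd_mA (X Y : finType) (phi : X -> Y -> C) : psd (mA phi).
Proof.
have -> : mA phi = mB (fun y x => phi x y) by [].
exact: psd_mB.
Qed.

Lemma trace_mB (X Y : finType) (phi : X -> Y -> C) : trace (mB phi) = trace (mA phi).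
Proof. by rewrite /trace /mA /mB exchange_big. Qed.

Lemma sum_unit (V : nmodType) (F : unit -> V) : \sum_u F u = F tt.
Proof. by rewrite (bigD1 tt) //= big1 ?addr0 // => -[]; rewrite eqxx. Qed.

Lemma psd_rank1 (I : finType) (g : I -> C) : psd (fun p q => g p * conjc (g q)).
Proof.
have -> : (fun p q => g p * conjc (g q)) = mA (fun (p : I) (_ : unit) => g p).
  do 2 (apply: functional_extensionality => ?); by rewrite /mA sum_unit.
exact: psd_mA.
Qed.

Lemma pure_zero (I : finType) (psi : I -> C) : unit_vector psi ->
  vN_entropy (proj psi) = 0.
Proof.
move=> Hu.
have -> : proj psi = mA (fun (p : I) (_ : unit) => psi p).
  do 2 (apply: functional_extensionality => ?); by rewrite /mA sum_unit.
rewrite pure_entropy.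
have [l [e [D l0 S]]] := eig_decomp (psd_mB (fun (p : I) (_ : unit) => psi p)).
have := decomp_trace D; rewrite trace_mB /trace sum_unit /mA.
under eq_bigr do rewrite sum_unit.
rewrite /unit_vector /cconj in Hu; rewrite Hu => Ht.
rewrite S sum_unit; have -> : l tt = 1 by apply: complexI; rewrite -Ht.
by rewrite xlnxE ln1 mulr0 oppr0.
Qed.


Lemma tp_marg (A B B' Cc : finType) (E : op R B -> op R B') (rho : op R ((A * B) * Cc)%type)
  a a' c c' : (forall X, trace (E X) = trace X) ->
  \sum_b' apply_on_B E rho ((a, b'), c) ((a', b'), c') = \sum_b rho ((a, b), c) ((a', b), c').
Proof. move=> TP; exact: (TP (fun b b'' => rho ((a, b), c) ((a', b''), c'))). Qed.

Lemma trace_sigma (A B B' Cc : finType) (E : op R B -> op R B') (rho : op R ((A * B) * Cc)%type) :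
  (forall X, trace (E X) = trace X) -> trace (apply_on_B E rho) = trace rho.
Proof.
move=> TP; rewrite /trace !sum_pair; apply: eq_bigr => a _.
rewrite exchange_big [RHS]exchange_big; apply: eq_bigr => c _ /=.
exact: tp_marg.
Qed.

Lemma psd_sigma (A B B' Cc : finType) (E : op R B -> op R B') (psi : ((A * B) * Cc)%type -> C) :
  CPTP E -> psd (apply_on_B E (proj psi)).
Proof.
case=> _ _ CP.
pose n := #|{: A * Cc}|.
pose f (p : ('I_n * B)%type) : ((A * B) * Cc)%type := (((enum_val p.1).1, p.2), (enum_val p.1).2).
pose X0 : op R ('I_n * B)%type := fun p q => psi (f p) * conjc (psi (f q)).
have H0 := CP n X0 (psd_rank1 (fun p => psi (f p))).
pose g (x : ((A * B') * Cc)%type) : ('I_n * B')%type := (enum_rank (x.1.1, x.2), x.1.2).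
pose ginv (p : ('I_n * B')%type) : ((A * B') * Cc)%type :=
  (((enum_val p.1).1, p.2), (enum_val p.1).2).
have bg : bijective g.
  exists ginv.
    by move=> [[a b] c]; rewrite /g /ginv /= enum_rankK.
  by move=> [i b]; rewrite /g /ginv /= -surjective_pairing enum_valK.
have Hs : forall x y, apply_on_B E (proj psi) x y = id_tensor E X0 (g x) (g y).
  move=> [[a b'] c] [[a' b''] c']; rewrite /apply_on_B /id_tensor /=.
  congr (E _ _ _); do 2 (apply: functional_extensionality => ?).
  by rewrite /X0 /f /= !enum_rankK.
have gK : forall x, ginv (g x) = x by move=> [[a b] c]; rewrite /g /ginv /= enum_rankK.
move=> v; have := H0 (fun p => v (ginv p)); move/le_trans; apply.
rewrite le_eqVlt; apply/orP; left; apply/eqP.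
rewrite (reindex g) /=; last exact: onW_bij.
apply: eq_bigr => x _.
rewrite (reindex g) /=; last exact: onW_bij.
apply: eq_bigr => y _.
by rewrite !gK Hs.
Qed.

End Q6.

Section Q7.
Variable R : realType.
Local Notation Cx := (complex R).
Local Open Scope complex_scope.
Local Open Scope ring_scope.

Lemma conjcM (a b : Cx) : conjc (a * b) = conjc a * conjc b.
Proof. exact: rmorphM. Qed.

Lemma sum3 (A B C : finType) (psi : ((A * B) * C)%type -> Cx) :
  \sum_a \sum_b \sum_c psi ((a, b), c) * conjc (psi ((a, b), c)) =
  \sum_i psi i * cconj (psi i).
Proof. by rewrite [RHS]sum_pair [RHS]sum_pair. Qed.

Lemma final_ineq (x5 x6 x7 xK x1 x2 x8 : R) : x5 <= x1 + xK -> x6 <= x2 + xK ->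
  x8 <= x7 + xK -> x5 + x6 - x7 - xK - (x1 + x2 - x8 - 0) <= 2 * xK.
Proof. move=> *; lra. Qed.

Lemma main_aux (A B B' C : finType)
    (psi : ((A * B) * C)%type -> Cx) (E : op R B -> op R B') :
  unit_vector psi -> CPTP E ->
  let rho := proj psi in
  let sigma := apply_on_B E rho in
  cmi sigma - cmi rho <= 2 * vN_entropy sigma.
Proof.
move=> Hu CP; cbv zeta.
set rho := proj psi; set sigma := apply_on_B E rho.
have [_ TP _] := CP.
have Hs : psd sigma := psd_sigma psi CP.
have Tr : trace rho = 1 := Hu.
have Ts : trace sigma = 1 by rewrite trace_sigma.
pose phi1 (x : (A * B)%type) (c : C) := psi (x, c).
pose phi2 (y : (B * C)%type) (a : A) := psi ((a, y.1), y.2).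
pose phi3 (b : B) (z : (A * C)%type) := psi ((z.1, b), z.2).
have e1 : vN_entropy (ptr_C rho) = vN_entropy (mB phi1).
  by rewrite -pure_entropy; apply: vN_ext.
have e2 : vN_entropy (ptr_A rho) = vN_entropy (mB phi2).
  by rewrite -pure_entropy; apply: vN_ext.
have e3 : vN_entropy (ptr_AC rho) = vN_entropy (mB phi3).
  rewrite -pure_entropy; apply: vN_ext => b b'.
  by rewrite /mA sum_pair.
have e4 : vN_entropy rho = 0 := pure_zero Hu.
have [l [w [Dw l0 Sw]]] := eig_decomp Hs.
pose phi (x k : ((A * B') * C)%type) := (Num.sqrt (l k))%:C * w k x.
have Hsig : forall x y, sigma x y = mA phi x y.
  case: Dw => _ _ HM x y; rewrite HM /mA; apply: eq_bigr => k _.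
  have cr : forall r : R, conjc (r%:C) = r%:C by move=> r; apply/eqP; rewrite eq_complex /= oppr0 !eqxx.
  rewrite /phi conjcM cr.
  have -> : (l k)%:C = (Num.sqrt (l k))%:C * (Num.sqrt (l k))%:C.
    by rewrite -rmorphM /= -expr2 sqr_sqrtr.
  ring.
pose phi5 (x : (A * B')%type) (z : (C * ((A * B') * C))%type) := phi (x, z.1) z.2.
pose phi6 (y : (B' * C)%type) (z : (A * ((A * B') * C))%type) := phi ((z.1, y.1), y.2) z.2.
pose phi7 (b : B') (z : ((A * C) * ((A * B') * C))%type) := phi ((z.1.1, b), z.1.2) z.2.
pose phi8 (y : (A * C)%type) (z : (B' * ((A * B') * C))%type) := phi ((y.1, z.1), y.2) z.2.
have eK : vN_entropy sigma = vN_entropy (mB phi).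
  by rewrite -pure_entropy; apply: vN_ext => x y; rewrite Hsig.
have e5 : vN_entropy (ptr_C sigma) = vN_entropy (mB phi5).
  rewrite -pure_entropy; apply: vN_ext => x y.
  by rewrite /ptr_C /mA sum_pair; apply: eq_bigr => c _; rewrite Hsig.
have e6 : vN_entropy (ptr_A sigma) = vN_entropy (mB phi6).
  rewrite -pure_entropy; apply: vN_ext => x y.
  by rewrite /ptr_A /mA sum_pair; apply: eq_bigr => a _; rewrite Hsig.
have e7 : vN_entropy (ptr_AC sigma) = vN_entropy (mB phi7).
  rewrite -pure_entropy; apply: vN_ext => x y.
  rewrite /ptr_AC /mA sum_pair sum_pair; apply: eq_bigr => a _; apply: eq_bigr => c _.
  by rewrite Hsig.
have e8 : vN_entropy (mB phi3) = vN_entropy (mB phi8).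
  rewrite -[RHS]pure_entropy; apply: vN_ext => -[a c] [a' c'].
  rewrite /mA /mB sum_pair /=.
  rewrite -(tp_marg rho a a' c c' TP); apply: eq_bigr => b _.
  by rewrite -/sigma Hsig.
have p5 : forall x y, mA phi5 x y = ptr_C sigma x y.
  by move=> x y; rewrite /ptr_C /mA sum_pair; apply: eq_bigr => c _; rewrite Hsig.
have p6 : forall x y, mA phi6 x y = ptr_A sigma x y.
  by move=> x y; rewrite /ptr_A /mA sum_pair; apply: eq_bigr => a _; rewrite Hsig.
have p7 : forall x y, mA phi7 x y = ptr_AC sigma x y.
  move=> x y; rewrite /ptr_AC /mA sum_pair sum_pair; apply: eq_bigr => a _; apply: eq_bigr => c _.
  by rewrite Hsig.
have p8 : forall x y, mA phi8 x y = mB phi3 x y.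
  move=> [a c] [a' c']; rewrite /mA /mB sum_pair /=.
  rewrite -(tp_marg rho a a' c c' TP); apply: eq_bigr => b _.
  by rewrite -/sigma Hsig.
have tr_ext : forall (I : finType) (M N : op R I), (forall x y, M x y = N x y) -> trace M = trace N.
  by move=> I M N H; rewrite /trace; apply: eq_bigr => x _; rewrite H.
have T5 : trace (mB phi5) = 1.
  by rewrite trace_mB (tr_ext _ _ _ p5) (trace_ptrY sigma).
have T6 : trace (mB phi6) = 1.
  rewrite trace_mB (tr_ext _ _ _ p6) -Ts /trace /ptr_A sum_pair [RHS]sum_pair [RHS]sum_pair.
  under eq_bigr do rewrite exchange_big.
  by rewrite exchange_big.
have T8 : trace (mB phi8) = 1.
  rewrite trace_mB (tr_ext _ _ _ p8) trace_mB -Tr /trace /mA /rho /proj.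
  transitivity (\sum_a \sum_b \sum_c psi ((a, b), c) * conjc (psi ((a, b), c))); last first.
    exact: (sum3 psi).
  rewrite exchange_big /= sum_pair; apply: eq_bigr => a _.
  by rewrite exchange_big.
have q5Y : forall c c', ptrY (mB phi5) c c' = mB phi1 c c'.
  move=> c c'; rewrite /ptrY /mB exchange_big /=.
  transitivity (\sum_x sigma (x, c) (x, c')).
    by apply: eq_bigr => x _; rewrite Hsig.
  rewrite sum_pair [RHS]sum_pair; apply: eq_bigr => a _.
  exact: tp_marg.
have q5X : forall k k', ptrX (mB phi5) k k' = mB phi k k'.
  move=> k k'; rewrite /ptrX /mB [RHS]sum_pair exchange_big /=.
  by apply: eq_bigr => x _.
have q6Y : forall a a', ptrY (mB phi6) a a' = mB phi2 a a'.
  move=> a a'; rewrite /ptrY /mB exchange_big /=.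
  transitivity (\sum_y sigma ((a, y.1), y.2) ((a', y.1), y.2)).
    by apply: eq_bigr => y _; rewrite Hsig.
  rewrite sum_pair [RHS]sum_pair exchange_big [RHS]exchange_big /=; apply: eq_bigr => c _.
  exact: tp_marg.
have q6X : forall k k', ptrX (mB phi6) k k' = mB phi k k'.
  move=> k k'; rewrite /ptrX /mB [RHS]sum_pair [RHS]sum_pair /=.
  by apply: eq_bigr => a _; rewrite sum_pair.
have q8Y : forall b b', ptrY (mB phi8) b b' = mA phi7 b b'.
  move=> b b'; rewrite /ptrY /mB /mA [RHS]sum_pair exchange_big /=.
  by apply: eq_bigr => x _.
have q8X : forall k k', ptrX (mB phi8) k k' = mB phi k k'.
  move=> k k'; rewrite /ptrX /mB [RHS]sum_pair [RHS]sum_pair /=.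
  under eq_bigr do rewrite sum_pair.
  by rewrite exchange_big.
have s1 := subadd (psd_mB phi5) T5.
rewrite (vN_ext q5Y) (vN_ext q5X) in s1.
have s2 := subadd (psd_mB phi6) T6.
rewrite (vN_ext q6Y) (vN_ext q6X) in s2.
have s3 := subadd (psd_mB phi8) T8.
rewrite (vN_ext q8Y) (vN_ext q8X) pure_entropy in s3.
rewrite /cmi e1 e2 e3 e4 e5 e6 e7 e8 eK.
exact: final_ineq s1 s2 s3.
Qed.

End Q7.


Theorem mainTheorem3 (R : realType) (A B B' C : finType)
    (psi : ((A * B) * C)%type -> complex R) (E : op R B -> op R B') :
  unit_vector psi -> CPTP E ->
  let rho := proj psi in
  let sigma := apply_on_B E rho in
  cmi sigma - cmi rho <= 2 * vN_entropy sigma.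
Proof. exact: main_aux. Qed.
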